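(* Let $G$ be a profinite group such that $H^*(G)$ is $2$-quadratic. Then the kernel of the inflation map $\inf_G\colon H^2(G^{[2]})_{\mathrm{dec}}\to H^2(G)$ is generated by those elements of the form $\psi\cup\psi'$ with $\psi,\psi'\in H^1(G^{[2]})$ which lie in this kernel.
   Context: $p$ is a prime, $q=p^s$ ($s\ge1$); $H^i(G)=H^i(G,\mathbb{Z}/q)$ is continuous cohomology with trivial action, with cup product. $G^{(2)}=G^q[G,G]$ and $G^{[2]}=G/G^{(2)}$. $H^2(G)_{\mathrm{dec}}$ is the image of the cup product $H^1(G)\otimes H^1(G)\to H^2(G)$. $H^*(G)$ is called $2$-quadratic if the kernel of the cup product map $H^1(G)\otimes_{\mathbb{Z}/q}H^1(G)\to H^2(G)$ equals the subgroup $C_2$ generated by all $\psi_1\otimes\psi_2$ with $\psi_1\cup\psi_2=0$ (i.e., the induced map $H^1(G)^{\otimes 2}/C_2\to H^2(G)_{\mathrm{dec}}$ is an isomorphism). *)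

(* Defs.v *)
From HB Require Import structures.
From mathcomp Require Import all_boot all_order all_algebra.
From mathcomp Require Import all_classical all_reals all_analysis.
From Stdlib Require List.
Unset Printing Implicit Defensive.
Import Order.TTheory GRing.Theory Num.Theory.
Local Open Scope classical_set_scope.
Local Open Scope ring_scope.

Definition is_group {G : Type} (mul : G -> G -> G) (inv : G -> G) (one : G) :=
  [/\ (forall x y z, mul x (mul y z) = mul (mul x y) z),
      (forall x, mul one x = x), (forall x, mul x one = x),
      (forall x, mul (inv x) x = one) & (forall x, mul x (inv x) = one)].

Definition is_profinite_group {G : topologicalType}
  (mul : G -> G -> G) (inv : G -> G) (one : G) :=
  [/\ is_group mul inv one,
      continuous (fun x : G * G => mul x.1 x.2),
      continuous inv,
      compact [set: G] &
      hausdorff_space G /\ totally_disconnected [set: G]].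

(* continuity into the discrete module Z/q = local constancy *)
Definition locconst {T : topologicalType} {V : Type} (f : T -> V) :=
  forall x, \forall y \near x, f y = f x.

Section Cohomology.
Variables (q : nat) (G : topologicalType)
  (mul : G -> G -> G) (inv : G -> G) (one : G).

Definition gpow (g : G) (n : nat) : G := iter n (mul g) one.
Definition gcomm (g h : G) : G := mul (mul (inv g) (inv h)) (mul g h).

Definition is_subgroup (S : set G) :=
  S one /\ (forall x y, S x -> S y -> S (mul x (inv y))).

(* G^(2) = G^q [G,G] : the closed subgroup generated by q-th powers and
   commutators *)
Definition Gq2 : set G := fun x =>
  forall S : set G, closed S -> is_subgroup S ->
    (forall g, S (gpow g q)) -> (forall g h, S (gcomm g h)) -> S x.

(* H^1(G, Z/q) with trivial action = continuous homomorphisms G -> Z/q *)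
Definition is_H1 (f : G -> 'Z_q) :=
  locconst f /\ (forall g h, f (mul g h) = f g + f h).

(* H^1(G^[2]) = continuous homomorphisms G/G^(2) -> Z/q, realised as those of G
   that are trivial on G^(2) (inflation identifies them) *)
Definition is_H1_quot (f : G -> 'Z_q) := is_H1 f /\ (forall n, Gq2 n -> f n = 0).

Definition cup (a b : G -> 'Z_q) : G * G -> 'Z_q := fun x => a x.1 * b x.2.

Definition cobound (c : G -> 'Z_q) : G * G -> 'Z_q :=
  fun x => c x.2 - c (mul x.1 x.2) + c x.1.

Definition zero_H2 (f : G * G -> 'Z_q) :=
  exists c : G -> 'Z_q, locconst c /\ f = cobound c.

(* a 2-cocycle of G^[2] (pulled back to G, i.e. G^(2)-invariant) is zero in
   H^2(G^[2]): it is the coboundary of a continuous cochain of G^[2] *)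
Definition zero_H2_quot (f : G * G -> 'Z_q) :=
  exists c : G -> 'Z_q, [/\ locconst c, (forall g n, Gq2 n -> c (mul g n) = c g)
                          & f = cobound c].

(* H^*(G) is 2-quadratic: every element sum_i a_i (x) b_i of H^1 (x) H^1 in
   the kernel of the cup product lies in C_2.  Membership in C_2 is expressed
   through the universal property of H^1 (x) H^1 / C_2: it is killed by every
   biadditive map vanishing on the pairs (a,b) with a u b = 0. *)
Definition quadratic2 :=
  forall l : seq ((G -> 'Z_q) * (G -> 'Z_q)),
    (forall x, List.In x l -> is_H1 x.1 /\ is_H1 x.2) ->
    zero_H2 (fun y => \sum_(x <- l) cup x.1 x.2 y) ->
    forall (M : zmodType) (B : (G -> 'Z_q) -> (G -> 'Z_q) -> M),
      (forall a a' b, is_H1 a -> is_H1 a' -> is_H1 b ->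
          B (fun g => a g + a' g) b = B a b + B a' b) ->
      (forall a b b', is_H1 a -> is_H1 b -> is_H1 b' ->
          B a (fun g => b g + b' g) = B a b + B a b') ->
      (forall a b, is_H1 a -> is_H1 b -> zero_H2 (cup a b) -> B a b = 0) ->
      \sum_(x <- l) B x.1 x.2 = 0.

End Cohomology.

(* Main.v *)
Require Import Defs.
From HB Require Import structures.
From mathcomp Require Import all_boot all_order all_algebra.
From mathcomp Require Import all_classical all_reals all_analysis.
From Stdlib Require List.
Import Order.TTheory GRing.Theory Num.Theory.
Local Open Scope ring_scope.
From mathcomp Require Import ring.
Record subgrp (V : zmodType) := SubGrp {
  Wp : V -> Prop; Wp0 : Wp 0; WpB : forall u v, Wp u -> Wp v -> Wp (u - v) }.
Arguments Wp {V}. Arguments Wp0 {V}. Arguments WpB {V}.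

Section Quo.
Variables (V : zmodType) (S : subgrp V).
Local Notation W := (Wp S).
Let W0 := Wp0 S.
Let WB := WpB S.

Lemma WN u : W u -> W (- u).
Proof. by move=> h; rewrite -sub0r; apply: WB. Qed.
Lemma WD u v : W u -> W v -> W (u + v).
Proof. by move=> hu hv; rewrite -[v]opprK; apply: WB => //; apply: WN. Qed.

Definition eW : rel V := fun u v => `[< W (u - v) >].
Lemma eW_refl : reflexive eW.
Proof. by move=> u; apply/asboolP; rewrite subrr. Qed.
Lemma eW_sym : symmetric eW.
Proof.
move=> u v; apply/asboolP/asboolP => h; rewrite -opprB; exact: WN.
Qed.
Lemma eW_trans : transitive eW.
Proof.
move=> v u w /asboolP h1 /asboolP h2; apply/asboolP.
have -> : u - w = (u - v) + (v - w) by rewrite addrA subrK.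
exact: WD.
Qed.
Canonical eW_equiv := EquivRel eW eW_refl eW_sym eW_trans.

Notation Q := {eq_quot eW}%qT.
Local Notation pi := (\pi_Q)%qT.

Lemma piP u v : pi u = pi v <-> W (u - v).
Proof.
split=> [/eqmodP/asboolP //|h]; apply/eqmodP/asboolP; exact: h.
Qed.

Definition qzero : Q := pi 0.
Definition qadd (x y : Q) : Q := pi (repr x + repr y).
Definition qopp (x : Q) : Q := pi (- repr x).

Lemma reprW u : W (repr (pi u) - u).
Proof. by apply/piP; rewrite reprK. Qed.

Lemma qaddE u v : qadd (pi u) (pi v) = pi (u + v).
Proof.
apply/piP; have -> : repr (pi u) + repr (pi v) - (u + v) =
  (repr (pi u) - u) + (repr (pi v) - v) by rewrite addrACA opprD.
by apply: WD; apply: reprW.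
Qed.
Lemma qoppE u : qopp (pi u) = pi (- u).
Proof. by apply/piP; rewrite -opprD; apply: WN; apply: reprW. Qed.

Lemma qaddA : associative qadd.
Proof.
move=> x y z; rewrite -[x](@reprK _ Q) -[y](@reprK _ Q) -[z](@reprK _ Q).
by rewrite !qaddE addrA.
Qed.
Lemma qaddC : commutative qadd.
Proof. by move=> x y; rewrite -[x](@reprK _ Q) -[y](@reprK _ Q) !qaddE addrC. Qed.
Lemma qadd0 : left_id qzero qadd.
Proof. by move=> x; rewrite -[x](@reprK _ Q) /qzero qaddE add0r. Qed.
Lemma qaddN : left_inverse qzero qopp qadd.
Proof. by move=> x; rewrite -[x](@reprK _ Q) qoppE qaddE addNr. Qed.

HB.instance Definition _ := GRing.isZmodule.Build Q qaddA qaddC qadd0 qaddN.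

Lemma piD u v : pi (u + v) = (pi u + pi v : Q).
Proof. by rewrite -qaddE. Qed.
Lemma pi0 : pi 0 = (0 : Q).
Proof. by []. Qed.
Lemma pi_eq0 u : pi u = (0 : Q) -> W u.
Proof. by rewrite -pi0 => /piP; rewrite subr0. Qed.
Lemma pi_sum (I : Type) (r : seq I) (F : I -> V) :
  pi (\sum_(i <- r) F i) = \sum_(i <- r) (pi (F i) : Q).
Proof.
elim: r => [|a r IH]; first by rewrite !big_nil.
by rewrite !big_cons piD IH.
Qed.
Lemma pi_W u : W u -> pi u = (0 : Q).
Proof. by move=> h; rewrite -pi0; apply/piP; rewrite subr0. Qed.
End Quo.
Notation QT S := {eq_quot (eW _ S)}%qT.


Section Aux.
Variables (q : nat) (G : topologicalType)
  (mul : G -> G -> G) (inv : G -> G) (one : G).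
Hypothesis hq : (1 < q)%N.
Hypothesis hG : is_group mul inv one.

Lemma H1_one {f : G -> 'Z_q} : is_H1 q G mul f -> f one = 0.
Proof.
case=> _ hf; have := hf one one; case: hG => _ h1 _ _ _.
rewrite h1 => e; apply: (@addrI _ (f one)); by rewrite addr0 -e.
Qed.

Lemma H1_inv {f : G -> 'Z_q} x : is_H1 q G mul f -> f (inv x) = - f x.
Proof.
move=> h; have := H1_one h; case: hG => _ _ _ hi _.
rewrite -(hi x); case: h => _ -> /eqP; rewrite addr_eq0 => /eqP //.
Qed.

Lemma H1_pow {f : G -> 'Z_q} g n : is_H1 q G mul f -> f (gpow G mul one g n) = f g *+ n.
Proof.
move=> h; elim: n => [|n IH]; first by rewrite /gpow /= (H1_one h).
rewrite /gpow iterS; case: (h) => _ ->; rewrite -/(gpow G mul one g n) IH.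
by rewrite mulrS.
Qed.

Lemma H1_quot (f : G -> 'Z_q) : is_H1 q G mul f -> is_H1_quot q G mul inv one f.
Proof.
move=> h; split=> // n hn; apply: (hn (fun x => f x = 0)).
- move=> x /= cx; have [lc _] := h.
  have [y [/= fy0 fyx]] := cx _ (lc x).
  by rewrite -fyx.
- split; first exact: H1_one.
  by move=> x y /= hx hy; case: (h) => _ ->; rewrite H1_inv // hx hy subr0.
- by move=> g /=; rewrite H1_pow // -mulr_natr pchar_Zp // mulr0.
- move=> g g' /=; rewrite /gcomm; case: (h) => _ hm.
  rewrite !hm !H1_inv //; ring.
Qed.

Definition zq := zero_H2_quot q G mul inv one.

Lemma zq_ext f g : zq f -> (forall y, f y = g y) -> zq g.
Proof. by move=> hf e; have <- : f = g by apply/funext. Qed.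

Lemma zq0 : zq (fun _ => 0).
Proof.
exists (fun _ => 0); split.
- by move=> x; apply: nearW.
- by [].
- by apply/funext => y; rewrite /cobound subrr addr0.
Qed.

Lemma zqB f g : zq f -> zq g -> zq (fun y => f y - g y).
Proof.
move=> [c1 [l1 i1 ->]] [c2 [l2 i2 ->]].
exists (fun x => c1 x - c2 x); split.
- by move=> x; apply: filterS2 (l1 x) (l2 x) => y -> ->.
- by move=> g0 n hn; rewrite i1 // i2.
- by apply/funext => y; rewrite /cobound; ring.
Qed.

Definition validt (t : seq ((G -> 'Z_q) * (G -> 'Z_q) * int)) :=
  forall x, List.In x t -> [/\ is_H1_quot q G mul inv one x.1.1,
                                  is_H1_quot q G mul inv one x.1.2 &
                                  zero_H2 q G mul (cup q G x.1.1 x.1.2)].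

Definition Wq (f : G * G -> 'Z_q) : Prop := exists t, validt t /\
  zq (fun y => f y - \sum_(x <- t) (cup q G x.1.1 x.1.2 y *~ x.2)).

Lemma Wq0 : Wq 0.
Proof.
exists [::]; split; first by [].
eapply zq_ext; [exact: zq0|]. by move=> y /=; rewrite big_nil subr0.
Qed.

Lemma WqB u v : Wq u -> Wq v -> Wq (u - v).
Proof.
move=> [t1 [v1 z1]] [t2 [v2 z2]].
exists (t1 ++ [seq (x.1, - x.2) | x <- t2]); split.
- move=> x hx; case: (List.in_app_or _ _ _ hx) => [h|h]; first exact: v1.
  have [y [e hy]] := proj1 (List.in_map_iff _ _ _) h.
  rewrite -e; exact: (v2 y hy).
- apply: (zq_ext _ _ (zqB _ _ z1 z2)) => y /=.
  rewrite big_cat big_map /=.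
  rewrite [X in _ = _ - (_ + X)](eq_bigr (fun x => - (cup q G x.1.1 x.1.2 y *~ x.2))); last by move=> x _; rewrite mulrNz.
  rewrite sumrN; change ((u - v) y) with (u y - v y); ring.
Qed.

Definition Sq := @SubGrp _ Wq Wq0 WqB.

End Aux.

Theorem lemma2p2 (p s q : nat) (G : topologicalType)
  (mul : G -> G -> G) (inv : G -> G) (one : G) :
  prime p -> (0 < s)%N -> q = (p ^ s)%N ->
  is_profinite_group mul inv one ->
  quadratic2 q G mul ->
  (* x = sum_{(a,b) in l} a u b  in H^2(G^[2])_dec, with inf_G x = 0 *)
  forall l : seq ((G -> 'Z_q) * (G -> 'Z_q)),
    (forall x, List.In x l -> is_H1_quot q G mul inv one x.1 /\
                              is_H1_quot q G mul inv one x.2) ->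
    zero_H2 q G mul (fun y => \sum_(x <- l) cup q G x.1 x.2 y) ->
  (* then x is a Z-linear combination of cups a u b, a,b in H^1(G^[2]),
     with inf_G (a u b) = 0 *)
  exists t : seq ((G -> 'Z_q) * (G -> 'Z_q) * int),
    (forall x, List.In x t -> [/\ is_H1_quot q G mul inv one x.1.1,
                                  is_H1_quot q G mul inv one x.1.2 &
                                  zero_H2 q G mul (cup q G x.1.1 x.1.2)]) /\
    zero_H2_quot q G mul inv one
      (fun y => \sum_(x <- l) cup q G x.1 x.2 y
                - \sum_(x <- t) (cup q G x.1.1 x.1.2 y *~ x.2)).
Proof.
move=> hp hs eq hpg hquad l hl hz.
have hq : (1 < q)%N by rewrite eq -(expn0 p) ltn_exp2l ?prime_gt1.
have hG : is_group mul inv one by case: hpg.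
pose S := Sq q G mul inv one.
have key := hquad l (fun x hx => conj (hl x hx).1.1 (hl x hx).2.1) hz (QT S)
  (fun a b => \pi_(QT S) (cup q G a b))%qT.
have {key} key : (\sum_(x <- l) (\pi_(QT S) (cup q G x.1 x.2) : QT S) = 0)%qT.
  apply: key.
  - move=> a a' b _ _ _; rewrite -piD; congr (\pi _)%qT.
    by apply/funext => y; rewrite /cup /= mulrDl.
  - move=> a b b' _ _ _; rewrite -piD; congr (\pi _)%qT.
    by apply/funext => y; rewrite /cup /= mulrDr.
  - move=> a b ha hb hab; apply: pi_W.
    exists [:: (a, b, 1%Z)]; split.
    + move=> x [<-|[]]; split => //; exact: H1_quot.
    + apply: (zq_ext _ _ _ _ _ _ _ (zq0 q G mul inv one)) => y /=.
      by rewrite big_cons big_nil addr0 mulr1z subrr.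
rewrite -pi_sum in key.
have [t [vt zt]] := pi_eq0 _ _ _ key.
exists t; split => //.
apply: (zq_ext _ _ _ _ _ _ _ zt) => y.
by rewrite fct_sumE.
Qed.
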